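(* Let $n\ge 3$, let $C_n$ be the cycle on vertices $1,\dots,n$ in cyclic order, and let $\Delta$ be its distance squared matrix, a circulant matrix whose first row is $(c_1,\dots,c_n)$ with $c_1=0$ and $c_i=c_{n+2-i}=(i-1)^2$ for $2\le i\le \lfloor n/2\rfloor+1$. For $j=1,\dots,n$ let $\lambda_j=\sum_{i=1}^n c_i\,\omega^{(i-1)j}$ with $\omega=e^{2\pi \mathrm{i}/n}$ (the eigenvalue of $\Delta$ for the eigenvector $(1,\omega^j,\omega^{2j},\dots,\omega^{(n-1)j})^T$). If $n=2r+1$ is odd, then \[ \lambda_j=2\cos(\pi j)\sum_{k=1}^{r}k^2\cos\!\left(\frac{(n-2k)\pi}{n}j\right) = 2\cos(\pi j)\left(\cos\!\left(\tfrac{(n-2)\pi}{n}j\right)+4\cos\!\left(\tfrac{(n-4)\pi}{n}j\right)+\cdots+\tfrac{(n-1)^2}{4}\cos\!\left(\tfrac{\pi}{n}j\right)\right). \] If $n=2m$ is even, then \[ \lambda_j=2\cos(\pi j)\left(\frac{n^2}{8}+\sum_{k=1}^{m-1}k^2\cos\!\left(\frac{(n-2k)\pi}{n}j\right)\right). \]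
   Context: For a connected graph with vertices $1,\dots,n$, the distance squared matrix is the $n\times n$ matrix with $(i,j)$ entry $d_{ij}^2$, where $d_{ij}$ is the graph distance between $i$ and $j$. *)

(* Defs.v *)
From Stdlib Require Import Reals Lia.
From Coquelicot Require Import Coquelicot.
Open Scope R_scope.

(* Graph distance in the cycle C_n (vertices 1..n in cyclic order)
   between vertices a and b: min(|a-b|, n-|a-b|). *)
Definition cycle_dist (n a b : nat) : nat :=
  let d := (a - b + (b - a))%nat in Nat.min d (n - d).

Definition crow (n i : nat) : R := INR (cycle_dist n 1 i) ^ 2.

Definition omega (n : nat) : C := (cos (2 * PI / INR n), sin (2 * PI / INR n)).

(* Csum f a b = f a + f (a+1) + ... + f b  (zero if b < a) *)
Fixpoint Csum_upto (f : nat -> C) (len a : nat) : C :=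
  match len with
  | O => 0%C
  | S l => Cplus (f a) (Csum_upto f l (S a))
  end.
Definition Csum (f : nat -> C) (a b : nat) : C := Csum_upto f (S b - a) a.

Fixpoint Rsum_upto (f : nat -> R) (len a : nat) : R :=
  match len with
  | O => 0
  | S l => f a + Rsum_upto f l (S a)
  end.
Definition Rsum (f : nat -> R) (a b : nat) : R := Rsum_upto f (S b - a) a.

Definition lambda (n j : nat) : C :=
  Csum (fun i => Cmult (RtoC (crow n i)) (Cpow (omega n) ((i - 1) * j))) 1 n.

(* Main.v *)
Require Import Defs.
From Stdlib Require Import Reals Lia Lra.
From Coquelicot Require Import Coquelicot.
Open Scope R_scope.

Lemma Rsu_snoc f l a : Rsum_upto f (S l) a = Rsum_upto f l a + f (a + l)%nat.
Proof. revert a; induction l; intros a.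
- simpl. rewrite Nat.add_0_r; ring.
- change (Rsum_upto f (S (S l)) a) with (f a + Rsum_upto f (S l) (S a)).
  rewrite IHl. simpl. replace (S (a + l))%nat with (a + S l)%nat by lia. ring. Qed.

Lemma Rsu_split f l1 l2 a : Rsum_upto f (l1 + l2) a = Rsum_upto f l1 a + Rsum_upto f l2 (a + l1).
Proof. revert a; induction l1; intros a; simpl.
- rewrite Nat.add_0_r; ring.
- rewrite IHl1. replace (S a + l1)%nat with (a + S l1)%nat by lia. ring. Qed.

Lemma Rsu_ext f g l a : (forall i, (a <= i < a + l)%nat -> f i = g i) ->
  Rsum_upto f l a = Rsum_upto g l a.
Proof. revert a; induction l; intros a H; simpl; auto.
rewrite (H a) by lia. rewrite IHl; auto. intros; apply H; lia. Qed.

Lemma Rsu_shift f l a : Rsum_upto f l (S a) = Rsum_upto (fun k => f (S k)) l a.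
Proof. revert a; induction l; intros a; simpl; auto. rewrite IHl; auto. Qed.

Lemma Rsu_rev f N l a : (a + l <= N)%nat ->
  Rsum_upto (fun k => f (N - k)%nat) (S l) a = Rsum_upto f (S l) (N - (a + l)).
Proof. revert a; induction l; intros a H.
- simpl. rewrite Nat.add_0_r. ring.
- change (Rsum_upto (fun k => f (N - k)%nat) (S (S l)) a) with
    (f (N - a)%nat + Rsum_upto (fun k => f (N - k)%nat) (S l) (S a)).
  rewrite IHl by lia. rewrite (Rsu_snoc f (S l)).
  replace (N - (S a + l) + S l)%nat with (N - a)%nat by lia.
  replace (N - (S a + l))%nat with (N - (a + S l))%nat by lia. replace (N - (a + S l) + S l)%nat with (N - a)%nat by lia. ring. Qed.

Lemma Rsu_plus f g l a : Rsum_upto (fun i => f i + g i) l a = Rsum_upto f l a + Rsum_upto g l a.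
Proof. revert a; induction l; intros a; simpl; [ring|rewrite IHl; ring]. Qed.

Lemma Rsu_scal c f l a : Rsum_upto (fun i => c * f i) l a = c * Rsum_upto f l a.
Proof. revert a; induction l; intros a; simpl; [ring|rewrite IHl; ring]. Qed.

Lemma Rsu_zero l a : Rsum_upto (fun _ => 0) l a = 0.
Proof. revert a; induction l; intros a; simpl; [ring|rewrite IHl; ring]. Qed.

Lemma Csu_comp f l a : Csum_upto f l a =
  (Rsum_upto (fun i => fst (f i)) l a, Rsum_upto (fun i => snd (f i)) l a).
Proof. revert a; induction l; intros a; simpl; auto. rewrite IHl. reflexivity. Qed.

Lemma Cpow_omega n p : Cpow (omega n) p =
  (cos (2 * PI / INR n * INR p), sin (2 * PI / INR n * INR p)).
Proof. induction p; simpl Cpow.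
- simpl INR. rewrite Rmult_0_r, cos_0, sin_0. reflexivity.
- rewrite IHp. unfold omega, Cmult; simpl fst; simpl snd. rewrite S_INR.
  replace (2 * PI / INR n * (INR p + 1)) with (2 * PI / INR n + 2 * PI / INR n * INR p) by ring.
  rewrite cos_plus, sin_plus. f_equal; ring. Qed.

Lemma sin_jPI j : sin (PI * INR j) = 0.
Proof. induction j. simpl; rewrite Rmult_0_r; apply sin_0.
rewrite S_INR, Rmult_plus_distr_l, Rmult_1_r, sin_plus, IHj, sin_PI. ring. Qed.

Lemma cos2_jPI j : cos (PI * INR j) ^ 2 = 1.
Proof. pose proof (sin2_cos2 (PI * INR j)). rewrite sin_jPI in H. unfold Rsqr in H. nra. Qed.

Definition Fr n j i := crow n i * cos (2 * PI / INR n * INR ((i - 1) * j)).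
Definition Gi n j i := crow n i * sin (2 * PI / INR n * INR ((i - 1) * j)).

Lemma lam_comp n j : lambda n j = (Rsum_upto (Fr n j) n 1, Rsum_upto (Gi n j) n 1).
Proof. unfold lambda, Csum. replace (S n - 1)%nat with n by lia. rewrite Csu_comp.
f_equal; apply Rsu_ext; intros i _; rewrite Cpow_omega; unfold Fr, Gi; simpl; ring. Qed.

Lemma crow_k n k : (1 <= k)%nat -> (2 * k <= n)%nat -> crow n (S k) = INR k ^ 2.
Proof. intros. unfold crow, cycle_dist. f_equal. f_equal. lia. Qed.

Lemma crow_nk n k : (1 <= k)%nat -> (2 * k <= n)%nat -> crow n (n + 1 - k) = INR k ^ 2.
Proof. intros. unfold crow, cycle_dist. f_equal. f_equal. lia. Qed.

Lemma angle n j k : (3 <= n)%nat -> (k <= n)%nat ->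
  2 * PI / INR n * INR ((n + 1 - k - 1) * j) = - (2 * PI / INR n * INR (k * j)) + 2 * INR j * PI.
Proof. intros. replace (n + 1 - k - 1)%nat with (n - k)%nat by lia.
assert (INR n <> 0) by (apply not_0_INR; lia).
rewrite !mult_INR, minus_INR by lia. field. auto. Qed.

Lemma pairF n j k : (3 <= n)%nat -> (1 <= k)%nat -> (2 * k <= n)%nat ->
  Fr n j (S k) + Fr n j (n + 1 - k) =
  2 * cos (PI * INR j) * (INR k ^ 2 * cos ((INR n - 2 * INR k) * PI / INR n * INR j)).
Proof. intros. unfold Fr. rewrite crow_k, crow_nk, angle by lia. rewrite cos_period, cos_neg.
replace (S k - 1)%nat with k by lia.
assert (INR n <> 0) by (apply not_0_INR; lia).
replace ((INR n - 2 * INR k) * PI / INR n * INR j) with (PI * INR j - 2 * PI / INR n * INR (k * j))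
  by (rewrite mult_INR; field; auto).
rewrite cos_minus, sin_jPI. pose proof (cos2_jPI j) as Hc2.
set (c := cos (PI * INR j)) in *. set (x := cos (2 * PI / INR n * INR (k * j))).
transitivity (2 * INR k ^ 2 * x * c ^ 2). rewrite Hc2; ring. ring. Qed.

Lemma pairG n j k : (3 <= n)%nat -> (1 <= k)%nat -> (2 * k <= n)%nat ->
  Gi n j (S k) + Gi n j (n + 1 - k) = 0.
Proof. intros. unfold Gi. rewrite crow_k, crow_nk, angle by lia. rewrite sin_period, sin_neg.
replace (S k - 1)%nat with k by lia. ring. Qed.

Lemma F1 n j : Fr n j 1 = 0.
Proof. unfold Fr, crow, cycle_dist. simpl. ring. Qed.
Lemma G1 n j : Gi n j 1 = 0.
Proof. unfold Gi, crow, cycle_dist. simpl. ring. Qed.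

Lemma pairsum (H : nat -> R) T n p :
  (forall k, (1 <= k <= S p)%nat -> H (S k) + H (n + 1 - k)%nat = T k) ->
  (1 + p <= n + 1)%nat ->
  Rsum_upto H (S p) 2 + Rsum_upto H (S p) (n + 1 - (1 + p)) = Rsum_upto T (S p) 1.
Proof. intros HT Hl. rewrite <- Rsu_rev by lia. rewrite Rsu_shift, <- Rsu_plus.
apply Rsu_ext. intros; apply HT; lia. Qed.

Lemma odd_split (H : nat -> R) n p : n = (2 * S p + 1)%nat ->
  Rsum_upto H n 1 = H 1%nat + (Rsum_upto H (S p) 2 + Rsum_upto H (S p) (n + 1 - (1 + p))).
Proof. intros E.
assert (E1: Rsum_upto H n 1 = Rsum_upto H (1 + S p + S p) 1) by (f_equal; lia).
rewrite E1, !Rsu_split. change (Rsum_upto H 1 1) with (H 1%nat + 0).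
replace (1 + (1 + S p))%nat with (n + 1 - (1 + p))%nat by lia. change (1+1)%nat with 2%nat. ring. Qed.

Lemma even_split (H : nat -> R) n p : n = (2 * S (S p))%nat ->
  Rsum_upto H n 1 = H 1%nat + H (S (S (S p))) + (Rsum_upto H (S p) 2 + Rsum_upto H (S p) (n + 1 - (1 + p))).
Proof. intros E.
assert (E1: Rsum_upto H n 1 = Rsum_upto H (1 + S p + 1 + S p) 1) by (f_equal; lia).
rewrite E1, !Rsu_split. change (Rsum_upto H 1 1) with (H 1%nat + 0).
change (Rsum_upto H 1 (1 + (1 + S p))) with (H (1 + (1 + S p))%nat + 0).
replace (1 + (1 + S p + 1))%nat with (n + 1 - (1 + p))%nat by lia.
replace (1 + (1 + S p))%nat with (S (S (S p))) by lia. change (1+1)%nat with 2%nat. ring. Qed.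

Theorem theorem5p2 (n : nat) (Hn : (3 <= n)%nat) (j : nat) (Hj1 : (1 <= j)%nat) (Hjn : (j <= n)%nat) :
  (forall r : nat, n = (2 * r + 1)%nat ->
     lambda n j =
     RtoC (2 * cos (PI * INR j) *
           Rsum (fun k => INR k ^ 2 * cos ((INR n - 2 * INR k) * PI / INR n * INR j)) 1 r)) /\
  (forall m : nat, n = (2 * m)%nat ->
     lambda n j =
     RtoC (2 * cos (PI * INR j) *
           (INR n ^ 2 / 8 +
            Rsum (fun k => INR k ^ 2 * cos ((INR n - 2 * INR k) * PI / INR n * INR j)) 1 (m - 1)))).
Proof.
split.
- intros r Hr. destruct r as [|p]; [lia|]. rewrite lam_comp. unfold Rsum.
  replace (S (S p) - 1)%nat with (S p) by lia. unfold RtoC. f_equal.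
  + rewrite (odd_split _ n p Hr), F1, Rplus_0_l, <- Rsu_scal.
    apply pairsum; [|lia]. intros k Hk. apply pairF; lia.
  + rewrite (odd_split _ n p Hr), G1, Rplus_0_l.
    rewrite (pairsum _ (fun _ => 0)). apply Rsu_zero. intros k Hk. apply pairG; lia. lia.
- intros m Hm. destruct m as [|[|p]]; [lia|lia|]. rewrite lam_comp. unfold Rsum.
  replace (S (S (S p) - 1) - 1)%nat with (S p) by lia. unfold RtoC. f_equal.
  + rewrite (even_split _ n p Hm), F1, Rplus_0_l, Rmult_plus_distr_l, <- Rsu_scal.
    rewrite (pairsum _ (fun k => 2 * cos (PI * INR j) * (INR k ^ 2 * cos ((INR n - 2 * INR k) * PI / INR n * INR j)))).
    2: { intros k Hk. apply pairF; lia. } 2: lia.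
    f_equal. unfold Fr, crow, cycle_dist.
    replace (Nat.min (1 - S (S (S p)) + (S (S (S p)) - 1)) (n - (1 - S (S (S p)) + (S (S (S p)) - 1)))) with (S (S p)) by lia.
    replace (S (S (S p)) - 1)%nat with (S (S p)) by lia.
    assert (INR n = 2 * INR (S (S p))) by (rewrite Hm, mult_INR; reflexivity).
    assert (INR (S (S p)) <> 0) by (apply not_0_INR; lia).
    replace (2 * PI / INR n * INR (S (S p) * j)) with (PI * INR j) by (rewrite mult_INR, H; field; auto).
    rewrite H. field.
  + rewrite (even_split _ n p Hm), G1, Rplus_0_l.
    rewrite (pairsum _ (fun _ => 0)). 2: { intros k Hk. apply pairG; lia. } 2: lia.
    rewrite Rsu_zero. unfold Gi.
    replace (S (S (S p)) - 1)%nat with (S (S p)) by lia.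
    assert (INR n = 2 * INR (S (S p))) by (rewrite Hm, mult_INR; reflexivity).
    assert (INR (S (S p)) <> 0) by (apply not_0_INR; lia).
    replace (2 * PI / INR n * INR (S (S p) * j)) with (PI * INR j) by (rewrite mult_INR, H; field; auto).
    rewrite sin_jPI. ring.
Qed.
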